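(* Let $a$ and $m$ be coprime positive integers. Then for all complex $s$ with ${\rm Re}(s)>1$, \[ m^s\,\Phi(s,a/m)=\sum_{d\mid m}\frac{d^s}{\varphi(d)}\sum_{\chi\in\hat{U}_d} \chi(a)\,\tau(\overline{\chi})\,L(s,\chi). \]
   Context: For real $\beta$ and ${\rm Re}(s)>1$, $\Phi(s,\beta)=\sum_{n=1}^\infty e^{2\pi i\beta n}n^{-s}$ (periodic zeta function). For a positive integer $d$, $\hat U_d$ is the group of Dirichlet characters of modulus $d$ (not necessarily primitive), $L(s,\chi)=\sum_{n\ge1}\chi(n)n^{-s}$, and $\tau(\chi)=\sum_{\nu\bmod d}\chi(\nu)e^{2\pi i\nu/d}$ is the Gauss sum computed with respect to the modulus $d$; $\overline\chi$ is the complex conjugate character; $\varphi$ is Euler's totient function. *)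

(* Defs.v *)
From HB Require Import structures.
From mathcomp Require Import all_boot all_order all_algebra.
From mathcomp Require Import all_classical all_reals all_analysis.
From mathcomp Require Import complex.
Set Implicit Arguments. Unset Strict Implicit. Unset Printing Implicit Defensive.
Import Order.TTheory GRing.Theory Num.Theory.
Import numFieldTopology.Exports numFieldNormedType.Exports.
Local Open Scope classical_set_scope.
Local Open Scope ring_scope.
Local Open Scope complex_scope.

Section Defs.
Variable R : realType.
Local Notation C := R[i].

Definition cexpi (t : R) : C := cos t +i* sin t.

Definition cpow (n : nat) (s : C) : C :=
  let l : R := ln (n%:R : R) in
  ((expR (complex.Re s * l) : R)%:C : C) * cexpi (complex.Im s * l).

(* Series are limits of partial sums in C^o, i.e. C with its modulus topology
   (the ^o alias carries MathComp-Analysis' normed-field instances). *)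
Definition periodic_zeta (s : C) (beta : R) : C :=
  limn ((fun N => \sum_(1 <= n < N) (cexpi (2 * pi * beta * (n%:R : R)) * cpow n (- s)))
          : nat -> C^o).

(* Dirichlet characters of modulus d (not necessarily primitive), viewed as
   arithmetic functions: completely multiplicative, d-periodic, and nonzero
   exactly on integers coprime to d (the extension by 0 of a character of
   (Z/dZ)^x). *)
Definition is_dchar (d : nat) (chi : nat -> C) : Prop :=
  [/\ chi 1%N = 1,
      (forall m n : nat, chi (m * n)%N = chi m * chi n),
      (forall n : nat, chi (n + d)%N = chi n) &
      (forall n : nat, (chi n != 0) = coprime n d)].

Definition dchars (d : nat) : set (nat -> C) := [set chi | is_dchar d chi].

Definition dirichletL (s : C) (chi : nat -> C) : C :=
  limn ((fun N => \sum_(1 <= n < N) (chi n * cpow n (- s))) : nat -> C^o).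

Definition gauss (d : nat) (chi : nat -> C) : C :=
  \sum_(nu < d) (chi nu * cexpi (2 * pi * (nu%:R : R) / (d%:R : R))).

Definition conjchar (chi : nat -> C) : nat -> C := fun n => (chi n)^*.

End Defs.

(* Main.v *)
Set Warnings "-all".
Require Import Defs.
From HB Require Import structures.
From mathcomp Require Import all_boot all_order all_algebra all_fingroup all_solvable all_field all_character.
From mathcomp Require Import all_classical all_reals all_analysis.
From mathcomp Require Import complex.
From mathcomp Require Import ring lra.
Import Order.TTheory GRing.Theory Num.Theory.
Import numFieldTopology.Exports numFieldNormedType.Exports.
Local Open Scope classical_set_scope.
Local Open Scope ring_scope.
Local Open Scope complex_scope.
Section A.
Variable R : realType.
Local Notation C := R[i].

Lemma cexpiD (x y : R) : cexpi (x + y) = cexpi x * cexpi y.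
Proof.
rewrite /cexpi cosD sinD; apply/eqP; rewrite eq_complex /=; apply/andP; split; apply/eqP; ring.
Qed.

Lemma cexpi0 : cexpi (0 : R) = 1.
Proof. by rewrite /cexpi cos0 sin0. Qed.

Lemma cexpi2pi (x : R) : cexpi (x + 2 * pi) = cexpi x.
Proof. by rewrite /cexpi (_ : 2 * pi = pi *+ 2) ?cosD2pi ?sinD2pi // mulr_natl. Qed.

Lemma cexpi_nat (k : nat) : cexpi (2 * pi * k%:R) = 1 :> C.
Proof.
elim: k => [|k IH]; first by rewrite mulr0 cexpi0.
rewrite (_ : 2 * pi * (k.+1)%:R = 2 * pi * k%:R + 2 * pi) ?cexpi2pi //.
by rewrite -natr1; ring.
Qed.

Lemma cexpi_norm (x : R) : `|cexpi x| = 1.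
Proof.
rewrite /cexpi.
Abort.
End A.
Section B.
Variable R : realType.
Local Notation C := R[i].

Lemma Cprim_root_exists n : (n > 0)%N -> exists z : C, n.-primitive_root z.
Proof.
pose p : {poly C} := 'X^n - 1; have [r Dp] := closed_field_poly_normal p.
move=> n_gt0; rewrite (monicP _) ?monicXnsubC // scale1r in Dp.
have rn1: all n.-unity_root r by apply/allP=> z; rewrite -root_prod_XsubC -Dp.
have sz_r: (n < (size r).+1)%N.
  by rewrite -(size_prod_XsubC r id) -Dp size_XnsubC.
have [|z] := hasP (has_prim_root n_gt0 rn1 _ sz_r); last by exists z.
by rewrite -separable_prod_XsubC -Dp separable_Xn_sub_1 // pnatr_eq0 -lt0n.
Qed.

Variable d : nat.
Hypothesis d_gt1 : (1 < d)%N.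

Definition uZ (n : nat) : {unit 'Z_d} := insubd (1%g : {unit 'Z_d}) (n%:R : 'Z_d).

Lemma val_uZ n : coprime n d -> val (uZ n) = n%:R.
Proof. by move=> cn; rewrite /uZ insubdK // unfold_in /= unitZpE // coprime_sym. Qed.


Lemma uZ1 : uZ 1 = 1%g.
Proof. by apply: val_inj; rewrite val_uZ ?coprime1n. Qed.

Lemma uZM m n : coprime m d -> coprime n d -> uZ (m * n) = (uZ m * uZ n)%g.
Proof.
move=> cm cn; apply: val_inj; rewrite FinRing.val_unitM !val_uZ ?coprimeMl ?cm ?cn //.
by rewrite natrM.
Qed.

Lemma uZD n : uZ (n + d) = uZ n.
Proof. by rewrite /uZ natrD pchar_Zp // addr0. Qed.

Lemma uZ_neq1 x : coprime x d -> (x %% d != 1)%N -> uZ x != 1%g.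
Proof.
move=> cx; apply: contra => /eqP/(congr1 val); rewrite val_uZ // FinRing.val_unit1 => H.
have := congr1 (@nat_of_ord _) H.
by rewrite -[X in _ = nat_of_ord X -> _]mulr1n !val_Zp_nat // (modn_small d_gt1) => ->.
Qed.

Lemma sep_char x : coprime x d -> (x %% d != 1)%N ->
  exists psi : nat -> C, is_dchar d psi /\ psi x != 1.
Proof.
move=> cx x1.
have abG : abelian (units_Zp d) := units_Zp_abelian d.
set G := units_Zp d in abG *.
have ux1 := @uZ_neq1 x cx x1.
have inG g : g \in G by rewrite /G /units_Zp inE.
have lin i : 'chi[G]_i \is a linear_char by move/char_abelianP: abG.
have [i chi_i] : exists i : Iirr G, 'chi_i (uZ x) != 1.
  apply/existsP; apply: contraT; rewrite negb_exists => /forallP /= Hall.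
  have := second_orthogonality_relation (uZ x) (group1 G).
  rewrite class1G inE (negbTE ux1) mulr0n.
  under eq_bigr => j _ do rewrite lin_char1 // conjC1 mulr1 (eqP (negPn (Hall j))).
  rewrite sumr_const card_ord => /eqP; rewrite pnatr_eq0 => /eqP HN.
  by have := card_Iirr_abelian abG; rewrite card_ord HN => HG; have := cardG_gt0 G; rewrite -HG.
pose N := #|G|.
have N_gt0 : (0 < N)%N := cardG_gt0 G.
have [z pz] := C_prim_root_exists N_gt0.
have [w pw] := @Cprim_root_exists N N_gt0.
have chiN g : 'chi_i g ^+ N = 1.
  by rewrite -lin_charX // expg_cardG // lin_char1.
pose sz := mkseq (fun k => z ^+ k) N.
have usz : uniq sz.
  rewrite /sz /mkseq map_inj_in_uniq ?iota_uniq // => k j; rewrite !mem_iota /= => Hk Hj.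
  by move/eqP; rewrite (eq_prim_root_expr pz) !modn_small // => /eqP.
pose f c := w ^+ (index c sz).
have fz k : (k < N)%N -> f (z ^+ k) = w ^+ k.
  move=> kN; rewrite /f; congr (_ ^+ _).
  have -> : z ^+ k = nth 0 sz k by rewrite nth_mkseq.
  by rewrite index_uniq // size_mkseq.
pose psi n := if coprime n d then f ('chi_i (uZ n)) else 0.
exists psi; split; last first.
  rewrite /psi cx; have [k Hk] := prim_rootP pz (chiN (uZ x)).
  rewrite Hk fz //; rewrite -(prim_order_dvd pw).
  case: (posnP k) => [k0|kpos]; last by apply/negP => /(dvdn_leq kpos); rewrite leqNgt ltn_ord.
  by move: chi_i; rewrite Hk k0 expr0 eqxx.
split.
- by rewrite /psi coprime1n uZ1 lin_char1 // -(expr0 z) fz.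
- move=> m n; rewrite /psi coprimeMl.
  case cm: (coprime m d); case cn: (coprime n d) => /=; rewrite ?mul0r ?mulr0 //.
  rewrite uZM // lin_charM //.
  have [k1 ->] := prim_rootP pz (chiN (uZ m)).
  have [k2 ->] := prim_rootP pz (chiN (uZ n)).
  by rewrite -exprD -(prim_expr_mod pz) !fz ?ltn_pmod // (prim_expr_mod pw) exprD.
- move=> n; rewrite /psi uZD -coprime_modl modnDr coprime_modl //.
- move=> n; rewrite /psi; case: (coprime n d); last by rewrite eqxx.
  have [k ->] := prim_rootP pz (chiN (uZ n)).
  rewrite fz // expf_neq0 //; apply/negP => /eqP w0.
  by move: (prim_expr_order pw); rewrite w0 expr0n eqn0Ngt N_gt0 /= => /eqP; rewrite eq_sym oner_eq0.
Qed.

End B.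
Section E.
Variable R : realType.
Local Notation C := R[i].

Lemma cexpiN (x : R) : cexpi (- x) * cexpi x = 1 :> C.
Proof. by rewrite -cexpiD addNr cexpi0. Qed.

Lemma norm_cexpi (x : R) : `|cexpi x| = 1 :> C.
Proof. by rewrite normc_def /= cos2Dsin2 sqrtr1. Qed.

Lemma norm_realc (r : R) : `|r%:C| = `|r|%:C :> C.
Proof. by rewrite normc_def /= expr0n addr0 sqrtr_sqr. Qed.

Lemma ReN (s : C) : complex.Re (- s) = - complex.Re s. Proof. by case: s. Qed.
Lemma ImN (s : C) : complex.Im (- s) = - complex.Im s. Proof. by case: s. Qed.

Lemma realcM (x y : R) : (x * y)%:C = x%:C * y%:C :> C.
Proof. by apply/eqP; rewrite eq_complex /= !mulr0 !mul0r subr0 addr0 !eqxx. Qed.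

Lemma cpow1 (s : C) : cpow 1 s = 1.
Proof. by rewrite /cpow ln1 !mulr0 expR0 cexpi0 mulr1. Qed.

Lemma cpowM m n (s : C) : (0 < m)%N -> (0 < n)%N -> cpow (m * n) s = cpow m s * cpow n s.
Proof.
move=> m0 n0; rewrite /cpow natrM lnM ?posrE ?ltr0n // !mulrDr expRD cexpiD realcM.
by rewrite mulrACA.
Qed.

Lemma cpowNK n (s : C) : cpow n (- s) * cpow n s = 1.
Proof.
rewrite /cpow ReN ImN !mulNr mulrACA -realcM cexpiN -expRD addNr expR0.
by rewrite mulr1.
Qed.

Lemma norm_cpow n (s : C) : `|cpow n s| = (expR (complex.Re s * ln n%:R))%:C.
Proof. by rewrite normrM norm_realc norm_cexpi mulr1 ger0_norm // expR_ge0. Qed.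

Lemma pterm_bound (sg : R) (k : nat) : 1 < sg -> (0 < k)%N ->
  expR (- sg * ln k.+1%:R) <=
  (expR ((1 - sg) * ln k%:R) - expR ((1 - sg) * ln k.+1%:R)) / (sg - 1).
Proof.
move=> hs k0.
set a := ln k%:R; set b := ln k.+1%:R.
have kp : (0 : R) < k%:R by rewrite ltr0n.
have k1p : (0 : R) < k.+1%:R by rewrite ltr0n.
have E3 : expR (- b) = k.+1%:R^-1 by rewrite expRN /b lnK // posrE.
have hab : a - b <= - expR (- b).
  rewrite /a /b -ln_div ?posrE // E3.
  set y : R := k%:R / k.+1%:R.
  have yp : 0 < y by rewrite /y divr_gt0.
  have -> : - k.+1%:R^-1 = y - 1 :> R.
    by rewrite /y -natr1; field; rewrite -natr1 in k1p; rewrite gt_eqF.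
  have := @le_ln1Dx R (y - 1); rewrite (addrC 1 (y - 1)) subrK; apply.
  lra.
have h1 := expR_ge1Dx ((sg - 1) * (b - a)).
have Ea : expR ((1 - sg) * a) = expR ((1 - sg) * b) * expR ((sg - 1) * (b - a)).
  by rewrite -expRD; congr expR; ring.
have Eb : expR (- sg * b) = expR ((1 - sg) * b) * expR (- b).
  by rewrite -expRD; congr expR; ring.
have E1p := expR_ge0 ((1 - sg) * b).
have E3p := expR_ge0 (- b).
have tp : 0 < sg - 1 by rewrite subr_gt0.
rewrite ler_pdivlMr // Ea Eb.
set E1 := expR ((1 - sg) * b) in E1p *.
set E2 := expR ((sg - 1) * (b - a)) in h1 *.
set E3' := expR (- b) in E3p hab *.
have h2 : E1 * (sg - 1) * E3' <= E1 * (sg - 1) * (b - a).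
  by apply: ler_wpM2l; [apply: mulr_ge0 => //; apply: ltW | lra].
have h3 : E1 * (1 + (sg - 1) * (b - a)) <= E1 * E2 by apply: ler_wpM2l.
nra.
Qed.

Lemma psum_bound (sg : R) : 1 < sg -> forall N,
  \sum_(1 <= n < N) expR (- sg * ln n%:R) <= 1 + (sg - 1)^-1.
Proof.
move=> hs.
pose f := fun k : nat => expR ((1 - sg) * ln (k%:R : R)).
have tp : 0 < sg - 1 by rewrite subr_gt0.
have tip : 0 < (sg - 1)^-1 by rewrite invr_gt0.
have H : forall N, \sum_(1 <= n < N.+2) expR (- sg * ln n%:R) <= 1 + (1 - f N.+1) / (sg - 1).
  elim => [|N IH].
    by rewrite big_nat1 /f ln1 !mulr0 expR0 subrr mul0r addr0.
  rewrite big_nat_recr //=.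
  have hb : expR (- sg * ln N.+2%:R) <= (f N.+1 - f N.+2) / (sg - 1) :=
    @pterm_bound sg N.+1 hs (ltn0Sn N).
  have -> : (1 - f N.+2) / (sg - 1) = (1 - f N.+1) / (sg - 1) + (f N.+1 - f N.+2) / (sg - 1).
    by rewrite -mulrDl; congr (_ * _); ring.
  set X := (1 - f N.+1) / (sg - 1) in IH *.
  set Y := (f N.+1 - f N.+2) / (sg - 1) in hb *.
  lra.
case => [|[|N]]; first by rewrite big_geq //; lra.
  by rewrite big_geq //; lra.
apply: le_trans (H N) _; rewrite lerD2l.
rewrite ler_pdivrMr // mulVf ?gt_eqF //.
by have := expR_ge0 ((1 - sg) * ln (N.+1%:R : R)); rewrite /f; lra.
Qed.
End E.
Section F.
Variable R : realType.
Local Notation C := R[i].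

Lemma shift_sum (V : zmodType) (v : nat -> V) N :
  \sum_(0 <= k < N) (if k is 0 then 0 else v k) = \sum_(1 <= n < N) v n.
Proof.
case: N => [|N]; first by rewrite !big_geq.
by rewrite big_nat_recl //= add0r big_add1.
Qed.

Lemma real_cvg (v r : nat -> R) (B : R) : (forall n, `|v n| <= r n) ->
  (forall N, \sum_(1 <= n < N) r n <= B) ->
  cvgn (fun N => \sum_(1 <= n < N) v n).
Proof.
move=> hv hB.
pose w k := if k is 0 then 0 else v k.
have -> : (fun N => \sum_(1 <= n < N) v n) = series w.
  by apply: funext => N; rewrite /series /= shift_sum.
apply: normed_cvg; apply: nondecreasing_is_cvgn.
  move=> n m nm /=; rewrite /series /= (@big_cat_nat _ _ _ n 0 m) //= lerDl.
  by apply: sumr_ge0 => i _; exact: normr_ge0.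
exists B => _ [n _ <-] /=.
apply: le_trans (hB n).
rewrite /series /= -(@shift_sum R r); apply: ler_sum => -[|k] _ //=; by rewrite normr0.
Qed.

Lemma normc_le (p q : R) : `|p +i* q| <= (`|p| + `|q|)%:C :> C.
Proof.
have -> : p +i* q = p%:C + q%:C * 'i :> C.
  by apply/eqP; rewrite eq_complex /=; apply/andP; split; apply/eqP; ring.
apply: le_trans (ler_normD _ _) _.
rewrite normrM !norm_realc.
have -> : `|'i| = 1 :> C by rewrite normc_def /= expr0n expr1n add0r sqrtr1.
by rewrite mulr1 lecE /= addr0 eqxx lexx.
Qed.

Lemma cvgC (U : nat -> C) (a b : R) :
  (fun n => complex.Re (U n)) @ \oo --> a ->
  (fun n => complex.Im (U n)) @ \oo --> b ->
  ((U : nat -> C^o) @ \oo --> (a +i* b : C^o)).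
Proof.
move=> /cvgrPdist_lt ha /cvgrPdist_lt hb; apply/cvgrPdist_lt => e e0.
move: (e0); rewrite ltcE /= => /andP [/eqP Ie Re0].
have e2 : 0 < complex.Re e / 2 by rewrite divr_gt0.
apply: filterS2 (ha _ e2) (hb _ e2) => n /=.
case: (U n) => x y /= h1 h2.
apply: le_lt_trans (normc_le _ _) _.
have -> : e = (complex.Re e)%:C by case: e e0 Ie {Re0 e2 h1 h2} => ? ? /= _ ->.
rewrite ltcR; lra.
Qed.

End F.
Section G.
Variable R : realType.
Local Notation C := R[i].

Lemma ReD (x y : C) : complex.Re (x + y) = complex.Re x + complex.Re y.
Proof. by case: x; case: y. Qed.
Lemma ImD (x y : C) : complex.Im (x + y) = complex.Im x + complex.Im y.
Proof. by case: x; case: y. Qed.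

Lemma complex_series_cvg (u : nat -> C) (r : nat -> R) (B : R) :
  (forall n, `|u n| <= (r n)%:C) -> (forall N, \sum_(1 <= n < N) r n <= B) ->
  cvgn ((fun N => \sum_(1 <= n < N) u n) : nat -> C^o).
Proof.
move=> hu hB.
have hRe n : `|complex.Re (u n)| <= r n.
  by rewrite -lecR; apply: le_trans (normc_ge_Re _) (hu n).
have hIm n : `|complex.Im (u n)| <= r n.
  rewrite -lecR; apply: le_trans (hu n).
  have -> : complex.Im (u n) = - complex.Re (u n * 'i) by rewrite ReiNIm opprK.
  rewrite normrN; apply: le_trans (normc_ge_Re _) _.
  rewrite normrM (_ : `|'i%C| = 1) ?mulr1 //.
  by rewrite normc_def /= expr0n expr1n add0r sqrtr1.
have cre := @real_cvg R _ _ _ hRe hB; have cim := @real_cvg R _ _ _ hIm hB.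
apply/cvg_ex; eexists; apply: cvgC.
  under eq_fun do rewrite (big_morph (@complex.Re R) ReD (erefl (@complex.Re R 0))).
  exact: cre.
under eq_fun do rewrite (big_morph (@complex.Im R) ImD (erefl (@complex.Im R 0))).
exact: cim.
Qed.
End G.
Set Implicit Arguments. Unset Strict Implicit.
Section C.
Variable R : realType.
Local Notation C := R[i].
Variable d : nat.
Hypothesis d_gt0 : (0 < d)%N.
Local Notation X := (@dchars R d).

Section OneChar.
Variable chi : nat -> C.
Hypothesis hchi : is_dchar d chi.

Lemma dchar1 : chi 1 = 1. Proof. by case: hchi. Qed.
Lemma dcharM m n : chi (m * n) = chi m * chi n. Proof. by case: hchi. Qed.
Lemma dcharP n : chi (n + d) = chi n. Proof. by case: hchi. Qed.
Lemma dcharN0 n : (chi n != 0) = coprime n d. Proof. by case: hchi. Qed.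

Lemma dchar_mod n : chi n = chi (n %% d)%N.
Proof.
rewrite {1}(divn_eq n d); elim: (n %/ d)%N => [|q IH]; first by rewrite mul0n add0n.
by rewrite mulSnr -addnAC dcharP.
Qed.

Lemma dchar0 n : ~~ coprime n d -> chi n = 0.
Proof. by rewrite -dcharN0 negbK => /eqP. Qed.

Lemma dcharX n k : chi (n ^ k) = chi n ^+ k.
Proof. by elim: k => [|k IH]; rewrite ?expn0 ?expr0 ?dchar1 // expnS exprS dcharM IH. Qed.

Lemma dchar_unit n : coprime n d -> chi n ^+ totient d = 1.
Proof.
by move=> cn; rewrite -dcharX dchar_mod (Euler_exp_totient cn) -dchar_mod dchar1.
Qed.

Lemma dchar_norm n : coprime n d -> `|chi n| = 1.
Proof.
move=> cn; apply/eqP; rewrite -(@pexpr_eq1 _ _ (totient d)) ?totient_gt0 //.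
by rewrite -normrX dchar_unit // normr1.
Qed.

Lemma dchar_conj n : coprime n d -> (chi n)^*%C = chi n ^+ (totient d).-1.
Proof.
move=> cn; have h1 : chi n * (chi n)^*%C = 1 by rewrite -sqr_normc dchar_norm // expr1n.
have h2 : chi n * chi n ^+ (totient d).-1 = 1.
  by rewrite -exprS prednK ?totient_gt0 // dchar_unit.
by rewrite -[LHS]mul1r -h2 mulrC mulrA (mulrC _ (chi n)) h1 mul1r.
Qed.

End OneChar.

Definition chi0 (n : nat) : C := (coprime n d)%:R.

Lemma chi0_dchar : @is_dchar R d chi0.
Proof.
split.
- by rewrite /chi0 coprime1n.
- by move=> m n; rewrite /chi0 coprimeMl; case: (coprime m d); case: (coprime n d); rewrite /= ?mulr1 ?mulr0 ?mul0r.
- by move=> n; rewrite /chi0 -coprime_modl modnDr coprime_modl.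
- by move=> n; rewrite /chi0; case: (coprime n d); rewrite ?oner_eq0 ?eqxx.
Qed.

Definition cmul (psi chi : nat -> C) : nat -> C := fun n => psi n * chi n.

Lemma cmul_dchar psi chi : is_dchar d psi -> is_dchar d chi -> is_dchar d (cmul psi chi).
Proof.
move=> hp hc; split; rewrite /cmul.
- by rewrite !dchar1 // mulr1.
- by move=> m n; rewrite !dcharM //; rewrite mulrACA.
- by move=> n; rewrite !dcharP.
- by move=> n; rewrite mulf_eq0 negb_or !dcharN0 // andbb.
Qed.

Lemma conj_dchar (chi : nat -> C) : is_dchar d chi -> is_dchar d (conjchar chi).
Proof.
move=> hc; split; rewrite /conjchar.
- by rewrite dchar1 // conjc1.
- by move=> m n; rewrite dcharM // rmorphM.
- by move=> n; rewrite dcharP.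
- by move=> n; rewrite conjc_eq0 dcharN0.
Qed.

Lemma cmul_conj (psi chi : nat -> C) : is_dchar d psi -> is_dchar d chi ->
  cmul psi (cmul (conjchar psi) chi) = chi.
Proof.
move=> hp hc; apply: funext => n; rewrite /cmul /conjchar mulrA.
case cn: (coprime n d); last by rewrite (dchar0 hc) ?cn // mulr0.
by rewrite -sqr_normc dchar_norm // expr1n mul1r.
Qed.

Lemma finite_chars : finite_set X.
Proof.
have [w pw] : exists w : C, (totient d).-primitive_root w by apply: Cprim_root_exists; rewrite totient_gt0.
pose dec (o : option 'I_(totient d)) : C := if o is Some k then w ^+ k else 0.
pose decode (t : {ffun 'I_d -> option 'I_(totient d)}) : nat -> C :=
  fun n => dec (t (Ordinal (ltn_pmod n d_gt0))).
apply: (@sub_finite_set _ _ (decode @` setT)); last exact: finite_image.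
move=> chi /= hc.
have : forall j : 'I_d, exists o, chi j = dec o.
  move=> j; case cj: (coprime j d); last by exists None; rewrite (dchar0 hc) ?cj.
  have [k Hk] := prim_rootP pw (dchar_unit hc cj).
  by exists (Some k).
move/boolp.choice => [f Hf]; exists (finfun f) => //.
by apply: funext => n; rewrite /decode ffunE -Hf /= -dchar_mod.
Qed.

Definition LX : seq (nat -> C) := finmap.enum_fset (fset_set X).

Lemma sumX (F : (nat -> C) -> C) :
  \sum_(chi \in X) F chi = \sum_(chi <- LX) F chi.
Proof. by rewrite fsbig_finite //; exact: finite_chars. Qed.

Lemma memLX (chi : nat -> C) : (chi \in LX) = `[< is_dchar d chi >].
Proof. by rewrite /LX in_fset_set; [apply/idP/asboolP; rewrite in_setE | exact: finite_chars]. Qed.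

Lemma memLXP (chi : nat -> C) : chi \in LX -> is_dchar d chi.
Proof. by rewrite memLX => /asboolP. Qed.

Lemma uniqLX : uniq LX.
Proof. exact: finmap.fset_uniq. Qed.


Lemma cmul_conj' (psi chi : nat -> C) : is_dchar d psi -> is_dchar d chi ->
  cmul (conjchar psi) (cmul psi chi) = chi.
Proof.
move=> hp hc; apply: funext => n; rewrite /cmul /conjchar mulrA.
case cn: (coprime n d); last by rewrite (dchar0 hc) ?cn // mulr0.
by rewrite (mulrC (psi n)^*%C) -sqr_normc dchar_norm // expr1n mul1r.
Qed.

Definition NX : C := \sum_(chi <- LX) (1 : C).

Lemma chi0_LX : chi0 \in LX.
Proof. by rewrite memLX; apply/asboolP; exact: chi0_dchar. Qed.

Lemma reindexLX (psi : nat -> C) (F : (nat -> C) -> C) : is_dchar d psi ->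
  \sum_(chi <- LX) F chi = \sum_(chi <- LX) F (cmul psi chi).
Proof.
move=> hp; rewrite -(big_map (cmul psi) xpredT F).
apply: perm_big; apply: uniq_perm.
- exact: uniqLX.
- rewrite map_inj_in_uniq ?uniqLX // => c1 c2 h1 h2 E.
  by rewrite -(cmul_conj' hp (memLXP h1)) E (cmul_conj' hp (memLXP h2)).
- move=> chi; apply/idP/mapP => [h | [c hc ->]].
    exists (cmul (conjchar psi) chi); last by rewrite (cmul_conj hp (memLXP h)).
    by rewrite memLX; apply/asboolP; apply: cmul_dchar; [apply: conj_dchar|apply: memLXP].
  by rewrite memLX; apply/asboolP; apply: cmul_dchar => //; apply: memLXP.
Qed.

Lemma sum_chars y : coprime y d ->
  \sum_(chi <- LX) chi y = ((y %% d)%N == (1 %% d)%N)%:R * NX.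
Proof.
move=> cy; case: eqP => [e|ne].
  rewrite mul1r /NX; apply: eq_big_seq => chi /memLXP hc.
  by rewrite (dchar_mod hc) e -(dchar_mod hc) dchar1.
rewrite mul0r.
have d1 : (1 < d)%N.
  by move: ne d_gt0; case: d => [|[|n]] //; rewrite !modn1.
have y1 : (y %% d != 1)%N by rewrite (modn_small d1) in ne; apply/eqP.
have [psi [hp py]] := @sep_char R d d1 y cy y1.
have E := reindexLX (fun chi => chi y) hp.
rewrite /cmul -mulr_sumr in E.
have : (1 - psi y) * \sum_(chi <- LX) chi y = 0 by rewrite mulrBl -E mul1r subrr.
by move/eqP; rewrite mulf_eq0 subr_eq0 eq_sym (negbTE py) /= => /eqP.
Qed.

Lemma sum_ord_chi0 : \sum_(x < d) chi0 x = (totient d)%:R.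
Proof.
rewrite totient_count_coprime natr_sum big_mkord; apply: eq_bigr => i _.
by rewrite /chi0 coprime_sym.
Qed.

Lemma sum_ord_nontriv (chi : nat -> C) : is_dchar d chi -> chi <> chi0 ->
  \sum_(x < d) chi x = 0.
Proof.
move=> hc ne.
have [y [cy ny]] : exists y, coprime y d /\ chi y != 1.
  apply: contra_notP ne => H; apply: funext => n; rewrite /chi0.
  case cn: (coprime n d); last by rewrite (dchar0 hc) ?cn.
  case: (eqVneq (chi n) 1) => [->|Hn]; first by rewrite /= mulr1n.
  by case: H; exists n.
set u := (y ^ (totient d).-1)%N.
have yu : (y * u = 1 %[mod d])%N.
  by rewrite /u -expnS prednK ?totient_gt0 // Euler_exp_totient.
pose h (x : 'I_d) : 'I_d := Ordinal (ltn_pmod (x * y) d_gt0).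
have hinj : injective h.
  move=> x1 x2 /(congr1 val) /= E.
  apply: val_inj => /=.
  rewrite -(modn_small (ltn_ord x1)) -(modn_small (ltn_ord x2)).
  have: (x1 * y * u = x2 * y * u %[mod d])%N by rewrite -modnMml E modnMml.
  by rewrite -!mulnA -(modnMmr x1) -(modnMmr x2) yu !modnMmr !muln1.
have E : \sum_(x < d) chi x = (\sum_(x < d) chi x) * chi y.
  rewrite {1}(reindex_inj hinj) /=.
  under eq_bigr do rewrite -(dchar_mod hc) (dcharM hc).
  by rewrite -mulr_suml.
set S := \sum_(i < d) chi i in E *.
have : S * (chi y - 1) = 0 by rewrite mulrBr mulr1 -E subrr.
by move/eqP; rewrite mulf_eq0 subr_eq0 (negbTE ny) orbF => /eqP.
Qed.

Lemma NX_totient : NX = (totient d)%:R.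
Proof.
have E1 : \sum_(x < d) \sum_(chi <- LX) chi x = NX.
  rewrite (bigD1 (Ordinal (ltn_pmod 1 d_gt0))) //= sum_chars; last first.
    by rewrite coprime_modl coprime1n.
  rewrite modn_mod eqxx mul1r big1 ?addr0 //.
  move=> x /= hx; case cx: (coprime x d).
    rewrite sum_chars // modn_small //; case: eqP => [hx1|_]; last by rewrite mul0r.
    by case/eqP: hx; apply: val_inj.
  by rewrite big1_seq // => chi /andP [_ /memLXP hc]; rewrite (dchar0 hc) ?cx.
have E2 : \sum_(chi <- LX) \sum_(x < d) chi x = (totient d)%:R.
  rewrite (bigD1_seq chi0) ?chi0_LX ?uniqLX //= sum_ord_chi0 big1_seq ?addr0 //.
  move=> chi /andP [ne hc]; apply: sum_ord_nontriv (memLXP hc) _.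
  by apply/eqP.
by rewrite -E1 exchange_big E2.
Qed.

Lemma cexpi_mod (b : nat) : cexpi (2 * pi * (b %% d)%N%:R / d%:R) = cexpi (2 * pi * b%:R / d%:R) :> C.
Proof.
rewrite {2}(divn_eq b d) natrD natrM.
have dn0 : (d%:R : R) != 0 by rewrite pnatr_eq0 -lt0n.
have -> : 2 * pi * ((b %/ d)%N%:R * d%:R + (b %% d)%N%:R) / d%:R =
   2 * pi * (b %/ d)%N%:R + 2 * pi * (b %% d)%N%:R / d%:R :> R by field.
by rewrite cexpiD cexpi_nat mul1r.
Qed.

Lemma gauss_sum b : coprime b d ->
  \sum_(chi <- LX) chi b * gauss d (conjchar chi) =
  (totient d)%:R * cexpi (2 * pi * b%:R / d%:R).
Proof.
move=> cb; rewrite /gauss.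
under eq_bigr do rewrite big_distrr.
rewrite exchange_big /=.
have key (nu : 'I_d) : \sum_(chi <- LX) chi b * (conjchar chi nu * cexpi (2 * pi * nu%:R / d%:R)) =
   (nu == (b %% d)%N :> nat)%:R * NX * cexpi (2 * pi * nu%:R / d%:R).
  case cn: (coprime nu d); last first.
    have -> : (nu == (b %% d)%N :> nat) = false.
      by apply: contraFF cn => /eqP ->; rewrite coprime_modl.
    rewrite !mul0r big1_seq // => chi /andP [_ /memLXP hc].
    by rewrite /conjchar (dchar0 (n:=nu) hc) ?cn // conjc0 mul0r mulr0.
  under eq_big_seq => chi /memLXP hc do
    rewrite /conjchar (dchar_conj hc) // -(dcharX hc) mulrA -(dcharM hc).
  rewrite -big_distrl /= sum_chars; last by rewrite coprimeMl cb coprimeXl.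
  congr (_ * _ * _); congr ((_ : bool)%:R); apply/eqP/eqP => [E|->].
    have : (b * nu ^ (totient d).-1 * nu = 1 * nu %[mod d])%N by rewrite -modnMml E modnMml.
    rewrite mul1n -mulnA -expnSr prednK ?totient_gt0 //.
    by rewrite -modnMmr Euler_exp_totient // modnMmr muln1 (modn_small (ltn_ord nu)) => ->.
  by rewrite -modnMml -expnS prednK ?totient_gt0 // Euler_exp_totient // coprime_modl.
rewrite (eq_bigr _ (fun nu _ => key nu)).
rewrite (bigD1 (Ordinal (ltn_pmod b d_gt0))) //= eqxx mul1r NX_totient cexpi_mod.
rewrite big1 ?addr0 // => nu /= hnu; case: eqP => [hx1|_]; last by rewrite !mul0r.
by case/eqP: hnu; apply: val_inj.
Qed.

End C.
Section Main.
Variable R : realType.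
Local Notation C := R[i].

Lemma reindex_mult (g : nat) (h : nat -> C) N : (0 < g)%N ->
  \sum_(1 <= n < N.+1) (if (g %| n)%N then h (n %/ g)%N else 0) =
  \sum_(1 <= k < (N %/ g).+1) h k.
Proof.
move=> g0; elim: N => [|N IH]; first by rewrite div0n !big_geq.
rewrite big_nat_recr //= IH (divnS _ g0).
case: (g %| N.+1)%N; rewrite ?add1n ?add0n ?addr0 //.
by rewrite [RHS]big_nat_recr.
Qed.

Lemma T_eq (g : nat) (h : nat -> C) N : (0 < g)%N ->
  \sum_(1 <= n < N) (if (g %| n)%N then h (n %/ g)%N else 0) =
  \sum_(1 <= k < (N.-1 %/ g).+1) h k.
Proof.
by move=> g0; case: N => [|N]; [rewrite div0n !big_geq | exact: reindex_mult].
Qed.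

Lemma comp_cvg (S : nat -> C^o) (l : C^o) (g : nat) : (0 < g)%N ->
  S @ \oo --> l -> (fun N => S (N.-1 %/ g).+1) @ \oo --> l.
Proof.
move=> g0 /cvgrPdist_lt hS; apply/cvgrPdist_lt => e e0.
have [M _ HM] := hS e e0.
exists (g * M).+1 => // N /= hN; apply: HM => /=.
apply: leqW; rewrite leq_divRL // mulnC.
by move: hN; case: N => //= N; rewrite ltnS.
Qed.

Lemma L_cvg (chi : nat -> C) (s : C) : 1 < complex.Re s -> (forall n, `|chi n| <= 1) ->
  cvgn ((fun N => \sum_(1 <= n < N) chi n * cpow n (- s)) : nat -> C^o).
Proof.
move=> hs hc.
apply: (@complex_series_cvg R _ (fun n => expR (- complex.Re s * ln n%:R)) (1 + (complex.Re s - 1)^-1)).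
  move=> n; rewrite normrM norm_cpow ReN.
  rewrite -[X in _ <= X]mul1r; apply: ler_wpM2r => //.
  by rewrite lecR expR_ge0.
exact: psum_bound.
Qed.

Lemma dchar_le1 d (chi : nat -> C) : (0 < d)%N -> is_dchar d chi -> forall n, `|chi n| <= 1.
Proof.
move=> d0 hc n; case cn: (coprime n d).
  by rewrite (dchar_norm d0 hc cn).
by rewrite (dchar0 hc) ?cn // normr0 ler01.
Qed.

End Main.
Section Main2.
Variable R : realType.
Local Notation C := R[i].

Lemma term_eq (a m : nat) (s : C) n : (0 < m)%N -> coprime a m -> (0 < n)%N ->
  cpow m s * (cexpi (2 * pi * (a%:R / m%:R) * n%:R) * cpow n (- s)) =
  \sum_(d <- divisors m) (cpow d s / (totient d)%:R *
     \sum_(chi <- LX R d) (chi a * gauss d (conjchar chi) *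
        (if ((m %/ d) %| n)%N then chi (n %/ (m %/ d))%N * cpow (n %/ (m %/ d))%N (- s)
         else 0))).
Proof.
move=> m0 cam n0.
set g := gcdn n m.
have g0 : (0 < g)%N by rewrite gcdn_gt0 n0.
have gm : (g %| m)%N := dvdn_gcdr n m.
have gn : (g %| n)%N := dvdn_gcdl n m.
set d0 := (m %/ g)%N.
have md0 : m = (g * d0)%N by rewrite /d0 mulnC divnK.
have d00 : (0 < d0)%N by move: m0; rewrite md0 muln_gt0 => /andP [].
set n' := (n %/ g)%N.
have nn' : n = (g * n')%N by rewrite /n' mulnC divnK.
have n'0 : (0 < n')%N by move: n0; rewrite nn' muln_gt0 => /andP [].
have cn' : coprime n' d0.
  have : g = (g * gcdn n' d0)%N by rewrite muln_gcdr -nn' -md0.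
  by rewrite -[X in X = _ -> _]muln1 => /eqP; rewrite eqn_pmul2l // eq_sym.
have d0m : d0 \in divisors m by rewrite -dvdn_divisors // {1}md0 dvdn_mull.
have gd0 : (m %/ d0)%N = g by rewrite {1}md0 mulnK.
rewrite (bigD1_seq d0) ?divisors_uniq //= [X in _ + X]big1_seq ?addr0; last first.
  move=> d /andP [dd0 dm].
  have dmd : (d %| m)%N by rewrite dvdn_divisors.
  have d0' : (0 < d)%N by apply: dvdn_gt0 dmd.
  rewrite big1_seq ?mulr0 // => chi /andP [_ hc]; have hchi := memLXP d0' hc.
  case: ifP => hdiv; last by rewrite mulr0.
  rewrite (dchar0 (n := (n %/ (m %/ d))%N) hchi) ?mul0r ?mulr0 //.
  apply/negP => cop; move/negP: dd0; apply; apply/eqP.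
  set g' := (m %/ d)%N in hdiv cop *.
  have g'0 : (0 < g')%N by rewrite divn_gt0 // dvdn_leq.
  have m' : m = (g' * d)%N by rewrite /g' divnK.
  have n'' : n = (g' * (n %/ g'))%N by rewrite mulnC divnK.
  have gg' : g = g'.
    rewrite /g {1}n'' {1}m' -muln_gcdr.
    by move: cop; rewrite /coprime => /eqP ->; rewrite muln1.
  by rewrite /d0 gg' {1}m' mulKn.
rewrite gd0 gn -/n'.
under eq_big_seq => chi /(memLXP d00) hc do
  rewrite mulrA (mulrAC (chi a)) -(dcharM hc).
rewrite -big_distrl /=.
rewrite (@gauss_sum R d0 d00); last first.
  rewrite coprimeMl cn' andbT; apply: coprime_dvdr cam.
  by rewrite {1}md0 dvdn_mull.
have Hc : cpow m s * cpow n (- s) = cpow d0 s * cpow n' (- s).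
  rewrite {1}md0 {1}nn' !cpowM // mulrACA (mulrC (cpow g s)) cpowNK mul1r //.
have He : 2 * pi * (a%:R / m%:R) * n%:R = 2 * pi * (a * n')%:R / d0%:R :> R.
  have mR : (m%:R : R) = g%:R * d0%:R by rewrite {1}md0 natrM.
  have nR : (n%:R : R) = g%:R * n'%:R by rewrite {1}nn' natrM.
  rewrite mR nR natrM; field.
  by rewrite !pnatr_eq0 -!lt0n g0 d00.
rewrite He.
have phi0 : ((totient d0)%:R : C) != 0 by rewrite pnatr_eq0 -lt0n totient_gt0.
rewrite mulrCA Hc; field.
exact: phi0.
Qed.

End Main2.
Lemma cvg_sum_seq (R : realType) (I : eqType) (r : seq I) (f : I -> nat -> R[i]^o) (l : I -> R[i]^o) :
  (forall i, i \in r -> f i @ \oo --> l i) ->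
  (fun N => \sum_(i <- r) f i N) @ \oo --> \sum_(i <- r) l i.
Proof.
move=> H; rewrite big_seq; under eq_fun do rewrite big_seq.
apply: (cvg_big (op := +%R) (x0 := 0)); first exact: add_continuous.
exact: H.
Qed.
Unset Implicit Arguments.
Theorem proposition1 (R : realType) (a m : nat) :
  (0 < a)%N -> (0 < m)%N -> coprime a m ->
  forall s : R[i], 1 < complex.Re s ->
  cpow m s * periodic_zeta s (a%:R / m%:R) =
  \sum_(d <- divisors m)
     (cpow d s / (totient d)%:R *
      \sum_(chi \in dchars d) (chi a * gauss d (conjchar chi) * dirichletL s chi)).
Proof.
move=> a0 m0 cam s hs.
have dpos d : d \in divisors m -> (0 < d)%N.
  by move=> dm; apply: (dvdn_gt0 m0); rewrite dvdn_divisors.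
have -> : \sum_(d <- divisors m)
     (cpow d s / (totient d)%:R *
      \sum_(chi \in dchars d) (chi a * gauss d (conjchar chi) * dirichletL s chi)) =
   \sum_(d <- divisors m)
     (cpow d s / (totient d)%:R *
      \sum_(chi <- LX R d) (chi a * gauss d (conjchar chi) * dirichletL s chi)).
  by apply: eq_big_seq => d dm; rewrite (sumX (dpos d dm)).
set RHS := \sum_(d <- divisors m) _.
pose Q N := \sum_(d <- divisors m) (cpow d s / (totient d)%:R *
     \sum_(chi <- LX R d) (chi a * gauss d (conjchar chi) *
       \sum_(1 <= n < N) (if ((m %/ d) %| n)%N then chi (n %/ (m %/ d))%N * cpow (n %/ (m %/ d))%N (- s)
         else 0))).
pose P N := \sum_(1 <= n < N) (cexpi (2 * pi * (a%:R / m%:R) * n%:R) * cpow n (- s)).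
have HQ N : Q N = cpow m s * P N.
  rewrite /Q /P mulr_sumr.
  rewrite (eq_big_nat _ _ (fun n hn => @term_eq R a m s n m0 cam (proj1 (andP hn)))).
  rewrite exchange_big /=; apply: eq_bigr => d _.
  rewrite -mulr_sumr exchange_big /=; congr (_ * _); apply: eq_bigr => chi _.
  by rewrite mulr_sumr.
have HQcvg : (Q : nat -> R[i]^o) @ \oo --> (RHS : R[i]^o).
  apply: cvg_sum_seq => d dm.
  apply: cvgMl_tmp; apply: cvg_sum_seq => chi hc.
  have hchi := memLXP (dpos d dm) hc.
  apply: cvgMl_tmp.
  have g0 : (0 < m %/ d)%N.
    by rewrite divn_gt0 ?dpos // dvdn_leq // dvdn_divisors.
  under eq_fun do rewrite (T_eq (fun k => chi k * cpow k (- s)) _ g0).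
  apply: (@comp_cvg R (fun K => \sum_(1 <= k < K) chi k * cpow k (- s)) _ _ g0).
  exact: (L_cvg hs (dchar_le1 (dpos d dm) hchi)).
have HP : (P : nat -> R[i]^o) @ \oo --> (cpow m (- s) * RHS : R[i]^o).
  have -> : P = (fun N => cpow m (- s) * Q N).
    by apply: funext => N; rewrite HQ mulrA cpowNK mul1r.
  exact: cvgMl_tmp HQcvg.
have -> : periodic_zeta s (a%:R / m%:R) = cpow m (- s) * RHS.
  rewrite /periodic_zeta; exact: (cvg_lim (@norm_hausdorff _ _) HP).
by rewrite mulrA (mulrC (cpow m s)) cpowNK mul1r.
Qed.
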